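(* $\mathrm{Ldim}(\mathcal N)=\infty$: for every $m\in\mathbb N$ there is a complete binary tree of depth $m$ shattered by $\mathcal N$.
   Context: $\mathcal N$ is the set of functions $f:[-1,1]\to\mathbb R$ of the form $f(x)=a_1\mathrm{ReLU}(w_1x+b_1)+a_2\mathrm{ReLU}(w_2x+b_2)+b$ with $w_1,w_2,b_1,b_2,a_1,a_2,b\in[-1,1]$, where $\mathrm{ReLU}(z)=\max\{0,z\}$. A complete binary tree of depth $m$ has internal nodes $v$ labeled by $x_v\in[-1,1]$, and the two edges leaving each internal node are labeled by two distinct real numbers; it is shattered by $\mathcal N$ if for every root-to-leaf path there exists $f\in\mathcal N$ with $f(x_v)$ equal to the label of the path's outgoing edge at $v$ for every node $v$ on the path. $\mathrm{Ldim}(\mathcal N)$ (the Littlestone dimension under $0/1$ loss) is the supremum of depths of shattered trees. *)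

(* Defs.v *)
From Stdlib Require Import Reals List.
Import ListNotations.
Open Scope R_scope.

Definition ReLU (z : R) : R := Rmax 0 z.

Definition in_unit (t : R) : Prop := -1 <= t <= 1.

Definition in_N (f : R -> R) : Prop :=
  exists w1 w2 b1 b2 a1 a2 b : R,
    in_unit w1 /\ in_unit w2 /\ in_unit b1 /\ in_unit b2 /\
    in_unit a1 /\ in_unit a2 /\ in_unit b /\
    forall x, in_unit x ->
      f x = a1 * ReLU (w1 * x + b1) + a2 * ReLU (w2 * x + b2) + b.

(* A complete binary tree: internal node v is identified with the path (list of
   left/right choices, false = left, true = right) from the root to v.
   node p = the label x_v of node p; edge p c = the label of the edge leaving p
   in direction c. *)
Record tree := mkTree { node : list bool -> R ; edge : list bool -> bool -> R }.

Definition valid_tree (m : nat) (T : tree) : Prop :=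
  forall p : list bool, (length p < m)%nat ->
    in_unit (node T p) /\ edge T p false <> edge T p true.

Definition shattered (m : nat) (T : tree) : Prop :=
  forall path : list bool, length path = m ->
    exists f, in_N f /\
      forall i : nat, (i < m)%nat ->
        f (node T (firstn i path)) = edge T (firstn i path) (nth i path false).

(* Main.v *)
Require Import Defs.
From Stdlib Require Import Reals List Lra Lia.
Import ListNotations.
Open Scope R_scope.

Definition sgnb (b : bool) : R := if b then 1 else -1.

Fixpoint pos (p : list bool) : R :=
  match p with
  | [] => 0
  | a :: q => sgnb a / 2 + pos q / 2
  end.

Lemma pos_bound : forall p, -(1 - (/2)^(length p)) <= pos p <= 1 - (/2)^(length p).
Proof.
  induction p as [|a p IH]; simpl.
  - lra.
  - destruct a; simpl; lra.
Qed.

Lemma pos_app : forall q r, pos (q ++ r) = pos q + (/2)^(length q) * pos r.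
Proof.
  induction q as [|a q IH]; intros r; simpl.
  - ring.
  - rewrite IH. field.
Qed.

Lemma pos_cons_sign : forall b r, sgnb b * pos (b :: r) >= (/2)^(S (length r)).
Proof.
  intros b r. pose proof (pos_bound r). simpl.
  destruct b; simpl; lra.
Qed.

Lemma key : forall q b r,
  sgnb b * (pos (q ++ b :: r) - pos q) >= (/2)^(length q + S (length r)).
Proof.
  intros q b r. rewrite pos_app, pow_add.
  pose proof (pos_cons_sign b r).
  pose proof (pow_lt (/2) (length q) ltac:(lra)).
  replace (sgnb b * (pos q + (/ 2) ^ length q * pos (b :: r) - pos q))
    with ((/ 2) ^ length q * (sgnb b * pos (b :: r))) by ring.
  apply Rle_ge. apply Rmult_le_compat_l; lra.
Qed.

Lemma skipn_nth : forall (l : list bool) i, (i < length l)%nat ->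
  skipn i l = nth i l false :: skipn (S i) l.
Proof.
  induction l as [|a l IH]; intros i Hi; simpl in *.
  - lia.
  - destruct i; simpl; [reflexivity|]. apply IH. lia.
Qed.

Theorem theoremE1 : forall m : nat, exists T : tree, valid_tree m T /\ shattered m T.
Proof.
  intros m.
  set (d := (/2)^m).
  assert (Hd : 0 < d) by (apply pow_lt; lra).
  exists (mkTree pos (fun _ b => if b then 0 else d)).
  split.
  - intros p Hp. simpl. split.
    + pose proof (pos_bound p). pose proof (pow_lt (/2) (length p) ltac:(lra)).
      unfold in_unit; lra.
    + lra.
  - intros path Hlen.
    set (t := pos path).
    assert (Ht := pos_bound path). rewrite Hlen in Ht. fold d in Ht. fold t in Ht.
    exists (fun x => 1 * ReLU (1 * x + - t) + -1 * ReLU (1 * x + (- t - d)) + 0).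
    split.
    + exists 1, 1, (-t), (-t - d), 1, (-1), 0.
      unfold in_unit. repeat split; try lra.
    + intros i Hi. simpl.
      assert (Hsplit : path = firstn i path ++ nth i path false :: skipn (S i) path).
      { rewrite <- skipn_nth by lia. symmetry. apply firstn_skipn. }
      pose proof (key (firstn i path) (nth i path false) (skipn (S i) path)) as K.
      rewrite <- Hsplit in K. fold t in K.
      assert (Hl : (length (firstn i path) + S (length (skipn (S i) path)))%nat = m).
      { rewrite firstn_length, skipn_length. lia. }
      rewrite Hl in K. fold d in K.
      set (x := pos (firstn i path)) in *.
      unfold ReLU.
      destruct (nth i path false); simpl in K.
      * rewrite (Rmax_left 0 (1 * x + - t)) by lra.
        rewrite (Rmax_left 0 (1 * x + (- t - d))) by lra. ring.
      * rewrite (Rmax_right 0 (1 * x + - t)) by lra.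
        rewrite (Rmax_right 0 (1 * x + (- t - d))) by lra. ring.
Qed.
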